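(* Let $d\ge 1$, $\alpha>\beta>d$, $a,b>0$, and $\phi(r)=a r^{-\alpha}-b r^{-\beta}$ for $r>0$. For $L\in\mathcal L_d(1)$ set $$\lambda^\phi_L:=\left(\frac{\alpha a\,\zeta_L(\alpha)}{\beta b\,\zeta_L(\beta)}\right)^{\frac1{\alpha-\beta}},$$ which is the unique minimizer of $\lambda\mapsto E_\phi[\lambda L]$ on $(0,\infty)$. Suppose that $L_d\in\mathcal L_d(1)$ is a minimizer of $L\mapsto\zeta_L(\beta)$ on $\mathcal L_d(1)$ and that $\lambda^\phi_{L_d}L_d$ is the unique (up to isometries) global minimizer of $E_\phi$ on $\mathcal L_d$. Then $L_d$ is the unique (up to isometries) minimizer of $L\mapsto\lambda^\phi_L$ on $\mathcal L_d(1)$; that is, $\lambda^\phi_L\ge\lambda^\phi_{L_d}$ for all $L\in\mathcal L_d(1)$, with equality only if $L$ is isometric to $L_d$.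
   Context: $\mathcal L_d$ denotes the set of all lattices $L=\bigoplus_{i=1}^d\mathbb Z u_i$ with $\{u_i\}$ a basis of $\mathbb R^d$, and $\mathcal L_d(1)\subset\mathcal L_d$ the lattices with $|\det(u_1,\dots,u_d)|=1$. For $s>d$, the Epstein zeta function is $\zeta_L(s)=\sum_{q\in L\setminus\{0\}}|q|^{-s}$. For a function $f:(0,\infty)\to\mathbb R$ with $|f(r)|=O(r^{-d-\eta})$ as $r\to\infty$ for some $\eta>0$, $E_f[L]:=\sum_{q\in L\setminus\{0\}}f(|q|)$. Uniqueness of minimizers among lattices is always understood up to isometries. *)

(* Defs.v *)
From HB Require Import structures.
From mathcomp Require Import all_boot all_order all_algebra.
From mathcomp Require Import all_classical all_reals all_analysis.
Set Implicit Arguments. Unset Strict Implicit. Unset Printing Implicit Defensive.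
Import Order.TTheory GRing.Theory Num.Theory.
Local Open Scope classical_set_scope.
Local Open Scope ring_scope.

Definition enorm (R : realType) (d : nat) (v : 'rV[R]_d) : R :=
  Num.sqrt (\sum_(i < d) v ord0 i ^+ 2).

(* A lattice of R^d is given by a basis matrix M (rows u_1..u_d) with det M != 0;
   lattice M is the set of integer combinations of the rows. *)
Definition is_basis (R : realType) (d : nat) (M : 'M[R]_d) : Prop := \det M != 0.

Definition unit_covol (R : realType) (d : nat) (M : 'M[R]_d) : Prop := `|\det M| = 1.

Definition lattice (R : realType) (d : nat) (M : 'M[R]_d) : set 'rV[R]_d :=
  [set q | exists c : 'rV[int]_d, q = map_mx (fun z : int => z%:~R) c *m M].

Definition lattice0 (R : realType) (d : nat) (M : 'M[R]_d) : set 'rV[R]_d :=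
  lattice M `\ 0.

Definition zeta (R : realType) (d : nat) (M : 'M[R]_d) (s : R) : R :=
  fine (\esum_(q in lattice0 M) ((enorm q) `^ (- s))%:E).

(* E_f[L] = sum_{q in L\{0}} f(|q|), an absolutely convergent sum under the
   decay hypothesis on f; written as (sum of positive parts) - (sum of negative parts). *)
Definition energy (R : realType) (d : nat) (f : R -> R) (M : 'M[R]_d) : R :=
  fine (\esum_(q in lattice0 M) (Num.max (f (enorm q)) 0)%:E)
  - fine (\esum_(q in lattice0 M) (Num.max (- f (enorm q)) 0)%:E).

Definition phi (R : realType) (a b alpha beta : R) (r : R) : R :=
  a * r `^ (- alpha) - b * r `^ (- beta).

Definition lambda_phi (R : realType) (d : nat) (a b alpha beta : R) (M : 'M[R]_d) : R :=
  ((alpha * a * zeta M alpha) / (beta * b * zeta M beta)) `^ (alpha - beta)^-1.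

(* Lattices isometric: some orthogonal map sends one onto the other (for
   lattices, any isometry of R^d mapping L onto L' can be taken linear). *)
Definition isometric (R : realType) (d : nat) (M N : 'M[R]_d) : Prop :=
  exists Q : 'M[R]_d, Q *m Q^T = 1%:M /\
    (fun q => q *m Q) @` lattice M = lattice N.

(* Main.v *)
Require Import Defs.
From HB Require Import structures.
From mathcomp Require Import all_boot all_order all_algebra.
From mathcomp Require Import all_classical all_reals all_analysis.
From mathcomp Require Import ring lra.
Import Order.TTheory GRing.Theory Num.Theory numFieldNormedType.Exports.
Set Implicit Arguments. Unset Strict Implicit.
Local Open Scope classical_set_scope.
Local Open Scope ring_scope.

Section esum_extra.
Variables (R : realType) (T : choiceType).
Local Open Scope ereal_scope.

Lemma esum_subset (A B : set T) (f : T -> \bar R) :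
  A `<=` B -> (forall i, B i -> 0 <= f i) ->
  \esum_(i in A) f i <= \esum_(i in B) f i.
Proof.
move=> AB f0; apply: ge_ereal_sup => _ [X [finX XA] <-].
apply: ereal_sup_ubound; exists X => //; split => // x /XA /AB; exact.
Qed.

Lemma esumZ_le (A : set T) (c : R) (f : T -> \bar R) : (0 <= c)%R ->
  (forall i, 0 <= f i) ->
  \esum_(i in A) (c%:E * f i) <= c%:E * \esum_(i in A) f i.
Proof.
move=> c0 f0; apply: ge_ereal_sup => _ [X [finX XA] <-].
rewrite -ge0_mule_fsumr//; apply: lee_pmul => //.
  by apply: fsume_ge0 => i _; apply: f0.
by apply: ereal_sup_ubound; exists X.
Qed.

Lemma esumZ (A : set T) (c : R) (f : T -> \bar R) : (0 <= c)%R ->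
  (forall i, 0 <= f i) ->
  \esum_(i in A) (c%:E * f i) = c%:E * \esum_(i in A) f i.
Proof.
move=> c0 f0; apply/eqP; rewrite eq_le esumZ_le //=.
have [->|cn0] := eqVneq c 0%R.
  by rewrite mul0e; apply: esum_ge0 => i _; rewrite mul0e.
have cp : (0 < c)%R by rewrite lt_neqAle eq_sym cn0.
have H := @esumZ_le A c^-1 (fun i => c%:E * f i).
have : \esum_(i in A) f i <= c^-1%:E * \esum_(i in A) (c%:E * f i).
  apply: le_trans (H _ _); last by move=> i; apply: mule_ge0 => //; rewrite lee_fin.
  by apply: le_esum => i _; rewrite muleA -EFinM mulVf // mul1e.
  by rewrite invr_ge0.
move=> h; have := lee_wpmul2l (x := c%:E) _ h.
by rewrite muleA -EFinM mulfV // mul1e; apply; rewrite lee_fin.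
Qed.

End esum_extra.


Section pseries.
Variable R : realType.

Lemma mvt_step (p x : R) : 1 < p -> 1 <= x ->
  (p - 1) * (x + 1) `^ (- p) <= x `^ (1 - p) - (x + 1) `^ (1 - p).
Proof.
move=> p1 x1.
have x0 : 0 < x by apply: lt_le_trans x1.
have hx : x < x + 1 by rewrite ltrDl.
have cpos : forall c, c \in `]x, x + 1[ -> 0 < c.
  by move=> c; rewrite in_itv /= => /andP[h _]; apply: lt_trans h.
have hc : {within [set` `[x, x + 1]%R], continuous (fun y : R => y `^ (1 - p))}%classic.
  apply: derivable_within_continuous => c cin.
  apply: derivable_powR; rewrite in_itv /= andbT; apply: lt_le_trans x0 _.
  by move: cin; rewrite in_itv /= => /andP[].
have [c cin E] := @MVT R (fun y => y `^ (1 - p)) (fun c => (1 - p) * c `^ (1 - p - 1)) x (x + 1) hx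
  (fun c cin => is_derive1_powR (1 - p) (cpos c cin)) hc.
have c0 := cpos c cin.
have cx : c <= x + 1 by move: cin; rewrite in_itv /= => /andP[_ /ltW].
have -> : x `^ (1 - p) - (x + 1) `^ (1 - p) = - ((x + 1) `^ (1 - p) - x `^ (1 - p)).
  by rewrite opprB.
rewrite E; have -> : x + 1 - x = 1 by rewrite addrAC subrr add0r.
rewrite mulr1 -mulNr opprB.
have -> : 1 - p - 1 = - p by rewrite addrAC subrr add0r.
apply: ler_wpM2l; first by rewrite subr_ge0 ltW.
rewrite !powRN lef_pV2 ?posrE ?powR_gt0 //; last exact: lt_trans hx.
apply: ge0_ler_powR => //; rewrite ?nnegrE ?ltW //.
  by apply: lt_trans p1.
by apply: lt_trans hx.
Qed.

Lemma pseries_bound (p : R) (N : nat) : 1 < p ->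
  \sum_(n < N.+1) (n.+1%:R) `^ (- p) <= p / (p - 1) - (N.+1%:R) `^ (1 - p) / (p - 1).
Proof.
move=> p1; have pp : 0 < p - 1 by rewrite subr_gt0.
elim: N => [|N IH].
  rewrite big_ord1 powR1 -mulrBl.
  have -> : p - 1 = (p - 1) by [].
  by rewrite mulfV ?gt_eqF.
rewrite big_ord_recr /=.
apply: le_trans (lerD IH (lexx _)) _.
have := @mvt_step p (N.+1%:R) p1 ltac:(by rewrite ler1n).
have -> : N.+2%:R = N.+1%:R + 1 :> R by rewrite -natr1.
move=> h.
have hw : (N.+1%:R + 1) `^ (- p) <= (N.+1%:R `^ (1 - p) - (N.+1%:R + 1) `^ (1 - p)) / (p - 1).
  by rewrite ler_pdivlMr // mulrC.
rewrite mulrBl in hw; lra.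
Qed.

Lemma pseries_bound' (p : R) (N : nat) : 1 < p ->
  \sum_(n < N) (n.+1%:R) `^ (- p) <= p / (p - 1).
Proof.
move=> p1; have pp : 0 < p - 1 by rewrite subr_gt0.
case: N => [|N]; first by rewrite big_ord0 divr_ge0 // ltW // (lt_trans _ p1).
apply: le_trans (@pseries_bound p N p1) _.
by rewrite lerBlDr lerDl divr_ge0 ?powR_ge0 // ltW.
Qed.

End pseries.


Section int_sum.
Variable R : realType.

Definition G (p : R) (k : int) : R := (1 + `|k%:~R : R|) `^ (- p).

Lemma esum_nat_bound (p : R) : 1 < p ->
  (\esum_(n in [set: nat]) ((n.+1%:R : R) `^ (- p))%:E <= (p / (p - 1))%:E)%E.
Proof.
move=> p1; rewrite -nneseries_esumT; last by move=> n; rewrite lee_fin powR_ge0.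
apply: lime_le; first by apply: is_cvg_nneseries => n _ _; rewrite lee_fin powR_ge0.
apply: nearW => n; rewrite sumEFin lee_fin big_mkord.
exact: pseries_bound'.
Qed.

Lemma esum_int_bound (p : R) : 1 < p ->
  (\esum_(k in [set: int]) (G p k)%:E <= (2 * (p / (p - 1)))%:E)%E.
Proof.
move=> p1.
rewrite (esumID [set k : int | 0 <= k]); last by move=> k _; rewrite lee_fin powR_ge0.
rewrite (_ : 2 * (p / (p - 1)) = p / (p - 1) + p / (p - 1)); last by ring.
rewrite EFinD; apply: leeD.
  have -> : [set: int] `&` [set k : int | 0 <= k] = (fun n : nat => n%:Z) @` [set: nat].
    apply/seteqP; split => [k [_ /= k0]|k [n _ <-]] /=; last by split.
    by exists `|k|%N => //; rewrite gez0_abs.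
  rewrite esum_image; last by move=> m n _ _ [].
  apply: le_trans _ (esum_nat_bound p1).
  by apply: le_esum => n _; rewrite /G lee_fin /= normr_nat -natr1 addrC.
have -> : [set: int] `&` ~` [set k : int | 0 <= k] = (fun n : nat => Negz n) @` [set: nat].
  apply/seteqP; split => [k [_ /= k0]|k [n _ <-]] /=; last by split.
  case: k k0 => [n|n] //= _; by exists n.
rewrite esum_image; last by move=> m n _ _ [].
apply: le_trans _ (esum_nat_bound p1).
apply: le_esum => n _; rewrite lee_fin /G.
rewrite NegzE mulrNz normrN /= normr_nat !powRN lef_pV2 ?posrE ?powR_gt0 ?ltr0Sn //.
  apply: ge0_ler_powR; rewrite ?nnegrE ?ler0n //; first by apply: ltW; apply: lt_trans p1.
by rewrite lerDr.
Qed.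
End int_sum.


Section prod_sum.
Variable R : realType.

Lemma esum_M1 (F : int -> \bar R) :
  \esum_(a in [set: 'M[int]_(1,1)]) F (a ord0 ord0) = \esum_(k in [set: int]) F k.
Proof.
rewrite (reindex_esum [set: int] [set: 'M[int]_(1,1)] (fun k => const_mx k)).
  by apply: eq_esum => k _; rewrite mxE.
split.
- by move=> k.
- by move=> k l _ _ /matrixP /(_ ord0 ord0); rewrite !mxE.
- move=> a _; exists (a ord0 ord0) => //; apply/matrixP => i j.
  by rewrite mxE !ord1.
Qed.

Lemma esum_prod_bound (p S : R) (n : nat) : 0 <= S ->
  (\esum_(k in [set: int]) (G p k)%:E <= S%:E)%E ->
  (\esum_(c in [set: 'rV[int]_n]) (\prod_(j < n) G p (c ord0 j))%:E <= (S ^+ n)%:E)%E.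
Proof.
move=> S0 hS; elim: n => [|n IH].
  have -> : [set: 'rV[int]_0] = [set 0].
    by apply/seteqP; split => x // _; rewrite /= thinmx0.
  by rewrite esum_set1 ?big_ord0 ?expr0 ?lee_fin.
change (\esum_(c in [set: 'M[int]_(1, 1 + n)]) (\prod_(j < 1 + n) G p (c ord0 j))%:E <= (S ^+ n.+1)%:E)%E.
rewrite (reindex_esum ([set: 'M[int]_(1,1)] `*`` (fun _ => [set: 'rV[int]_n])) [set: 'M[int]_(1, 1 + n)]
   (fun x => row_mx x.1 x.2)); last first.
  split.
  - by move=> x.
  - move=> x y _ _ /eq_row_mx [h1 h2]; case: x y h1 h2 => [x1 x2] [y1 y2] /= -> -> //.
  - by move=> a _; exists (lsubmx a, rsubmx a) => //=; rewrite hsubmxK.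
rewrite -(@esum_esum _ _ _ [set: 'M[int]_(1,1)] (fun _ => [set: 'rV[int]_n])
   (fun a b => (\prod_(j < 1 + n) G p (row_mx a b ord0 j))%:E)); last first.
  by move=> a b _ _; rewrite lee_fin prodr_ge0 // => j _; rewrite powR_ge0.
have e1 : forall (a : 'M[int]_(1,1)) (b : 'rV[int]_n),
    \prod_(j < 1 + n) G p (row_mx a b ord0 j) = G p (a ord0 ord0) * \prod_(j < n) G p (b ord0 j).
  move=> a b; rewrite big_split_ord big_ord1 /=; congr (_ * _).
    by rewrite (row_mxEl a b ord0 ord0).
  by apply: eq_bigr => j _; rewrite row_mxEr.
have Gge0 : forall k, 0 <= G p k by move=> k; rewrite powR_ge0.
apply: (@le_trans _ _ (\esum_(a in [set: 'M[int]_(1,1)]) ((S ^+ n)%:E * (G p (a ord0 ord0))%:E))%E).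
  apply: le_esum => a _.
  under eq_esum do rewrite e1 EFinM.
  rewrite esumZ //; last by move=> b; rewrite lee_fin prodr_ge0.
  rewrite muleC; apply: lee_wpmul2r => //; by rewrite lee_fin.
rewrite esumZ ?exprSr ?EFinM; last by move=> a; rewrite lee_fin.
  rewrite (esum_M1 (fun k => (G p k)%:E)); apply: lee_wpmul2l => //.
  by rewrite lee_fin exprn_ge0.
by rewrite exprn_ge0.
Qed.
End prod_sum.


Section latt.
Variable R : realType.
Variable d : nat.

Definition iota_mx (c : 'rV[int]_d) : 'rV[R]_d := map_mx (fun z : int => z%:~R) c.

Lemma enorm_ge0 (v : 'rV[R]_d) : 0 <= enorm v.
Proof. exact: sqrtr_ge0. Qed.

Lemma enorm_ge_coord (v : 'rV[R]_d) j : `|v ord0 j| <= enorm v.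
Proof.
rewrite /enorm -sqrtr_sqr ler_sqrt; last by rewrite sumr_ge0 // => i _; rewrite sqr_ge0.
by rewrite (bigD1 j) //= lerDl sumr_ge0 // => i _; rewrite sqr_ge0.
Qed.

Lemma powR_anti (x y p : R) : 0 < x -> x <= y -> 0 <= p -> y `^ (- p) <= x `^ (- p).
Proof.
move=> x0 xy p0; have y0 : 0 < y by apply: lt_le_trans xy.
rewrite !powRN lef_pV2 ?posrE ?powR_gt0 //.
by apply: (ge0_ler_powR p0) => //; rewrite nnegrE ltW.
Qed.

Lemma coord_bound (M : 'M[R]_d) : \det M != 0 ->
  exists2 K, 0 < K & forall (c : 'rV[int]_d) j,
    `|(c ord0 j)%:~R : R| <= K * enorm (iota_mx c *m M).
Proof.
move=> hM; have uM : M \in unitmx by rewrite unitmxE unitfE.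
set Mi := invmx M.
exists (1 + \sum_i \sum_j `|Mi i j|).
  by rewrite ltr_pwDl // sumr_ge0 // => i _; rewrite sumr_ge0.
move=> c j; set v := iota_mx c *m M.
have -> : (c ord0 j)%:~R = (v *m Mi) ord0 j by rewrite /v mulmxK // mxE.
rewrite mxE; apply: le_trans (ler_norm_sum _ _ _) _.
apply: (@le_trans _ _ (\sum_i enorm v * `|Mi i j|)).
  by apply: ler_sum => i _; rewrite normrM ler_wpM2r // enorm_ge_coord.
rewrite -mulr_sumr mulrC ler_wpM2r ?enorm_ge0 //.
apply: le_trans (ler_wpDl ler01 (lexx _)) ; apply: ler_sum => i _.
by rewrite (bigD1 j) //= lerDl sumr_ge0.
Qed.

Lemma iota_mx_inj : injective iota_mx.
Proof.
move=> c c' /matrixP h; apply/matrixP => i j; have := h i j; rewrite !mxE.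
exact: intr_inj.
Qed.

Lemma lattice0E (M : 'M[R]_d) : \det M != 0 ->
  lattice0 M = (fun c => iota_mx c *m M) @` [set c | c != 0].
Proof.
move=> hM; have uM : M \in unitmx by rewrite unitmxE unitfE.
apply/seteqP; split.
  move=> q [[c ->]] /= q0; exists c => //=; apply/eqP => c0; apply: q0.
  have -> : map_mx (fun z : int => z%:~R) c = 0 :> 'rV[R]_d by rewrite c0; apply/matrixP => i j; rewrite !mxE.
  by rewrite mul0mx.
move=> q [c /= c0 <-]; split; first by exists c.
move=> /= /(congr1 (mulmx^~ (invmx M))); rewrite mulmxK // mul0mx => h.
apply: (negP c0); apply/eqP/iota_mx_inj; rewrite h.
by apply/matrixP => i j; rewrite !mxE.
Qed.

Lemma term_bound (M : 'M[R]_d) (s : R) K : (0 < d)%N -> 0 <= s -> 0 < K ->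
  (forall (c : 'rV[int]_d) j, `|(c ord0 j)%:~R : R| <= K * enorm (iota_mx c *m M)) ->
  forall c : 'rV[int]_d, c != 0 ->
  enorm (iota_mx c *m M) `^ (- s) <= (2 * K) `^ s * \prod_(j < d) G (s / d%:R) (c ord0 j).
Proof.
move=> d0 s0 K0 hK c c0; set e := enorm (iota_mx c *m M).
have [j cj] : exists j, c ord0 j != 0.
  apply/existsP; apply: contraR c0 => /existsPn h; apply/eqP/matrixP => i k.
  by rewrite !ord1 mxE; move: (h k); rewrite negbK => /eqP.
have e1 : 1 <= K * e.
  apply: le_trans (hK c j); apply: norm_intr_ge1; rewrite ?intr_int //.
  by rewrite intr_eq0.
have e0 : 0 < e.
  have : 0 < K * e by apply: lt_le_trans e1.
  by rewrite pmulr_rgt0.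
have dp : 0 < d%:R :> R by rewrite ltr0n.
have hle : forall j, 1 + `|(c ord0 j)%:~R : R| <= 2 * K * e.
  move=> i; rewrite (_ : 2 * K * e = K * e + K * e); last by ring.
  by apply: lerD => //; exact: hK.
have : \prod_(j < d) ((2 * K * e) `^ (- (s / d%:R))) <= \prod_(j < d) G (s / d%:R) (c ord0 j).
  apply: ler_prod => i _; rewrite powR_ge0 /=; apply: powR_anti => //.
  by rewrite divr_ge0 // ltW.
rewrite prodr_const card_ord -powR_mulrn ?powR_ge0 // -powRrM.
have -> : - (s / d%:R) * d%:R = - s by rewrite mulNr divfK // gt_eqF.
have eM : (2 * K * e) `^ (- s) = (2 * K) `^ (- s) * e `^ (- s).
  by rewrite powRM // ?mulr_ge0 // ltW.
rewrite eM => h.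
apply: le_trans (ler_wpM2l (powR_ge0 _ _) h).
rewrite mulrA [(2 * K) `^ (- s)]powRN mulfV ?mul1r // gt_eqF // powR_gt0 // mulr_gt0 //.
Qed.
End latt.


Section zfin.
Variable R : realType.
Variable d : nat.

Lemma zeta_esum_fin (M : 'M[R]_d) (s : R) : \det M != 0 -> (0 < d)%N -> d%:R < s ->
  (\esum_(q in lattice0 M) ((enorm q) `^ (- s))%:E < +oo)%E.
Proof.
move=> hM d0 ds; have uM : M \in unitmx by rewrite unitmxE unitfE.
have dp : 0 < d%:R :> R by rewrite ltr0n.
have s0 : 0 <= s by apply: ltW; apply: lt_trans ds.
have [K K0 hK] := coord_bound hM.
set p := s / d%:R.
have p1 : 1 < p by rewrite /p ltr_pdivlMr // mul1r.
set S := 2 * (p / (p - 1)).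
have S0 : 0 <= S by rewrite mulr_ge0 // divr_ge0 // ?subr_ge0 ltW // (lt_trans _ p1).
rewrite lattice0E // esum_image; last first.
  move=> c c' _ _ /(congr1 (mulmx^~ (invmx M))); rewrite !mulmxK //.
  exact: iota_mx_inj.
apply: (@le_lt_trans _ _ (((2 * K) `^ s * S ^+ d)%:E)); last by rewrite ltry.
pose f := fun c : 'rV[int]_d => mule ((2 * K) `^ s)%:E (\prod_(j < d) G p (c ord0 j))%:E.
apply: (@le_trans _ _ (esum [set c : 'rV[int]_d | c != 0] f)).
  apply: le_esum => c /= c0; rewrite -EFinM lee_fin.
  exact: term_bound.
have Pge0 : forall c : 'rV[int]_d, (0 <= (\prod_(j < d) G p (c ord0 j))%:E)%E.
  by move=> c; rewrite lee_fin prodr_ge0 // => j _; rewrite powR_ge0.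
apply: le_trans (esum_subset (B := setT) _ _) _ => //.
  by move=> c _; rewrite mule_ge0 // lee_fin powR_ge0.
rewrite esumZ ?powR_ge0 // EFinM; apply: lee_wpmul2l; first by rewrite lee_fin powR_ge0.
apply: esum_prod_bound => //.
exact: esum_int_bound.
Qed.
End zfin.


Section energy.
Variable R : realType.
Variable d : nat.

Lemma esum_fineK (A : set 'rV[R]_d) (f : 'rV[R]_d -> \bar R) :
  (forall q, 0 <= f q)%E -> (\esum_(q in A) f q < +oo)%E ->
  ((fine (\esum_(q in A) f q))%:E = \esum_(q in A) f q)%E.
Proof.
move=> f0 fin; apply: fineK; rewrite ge0_fin_numE //.
by apply: esum_ge0 => q _.
Qed.

Lemma energy_formula (M : 'M[R]_d) (a b alpha beta : R) :
  \det M != 0 -> (0 < d)%N -> d%:R < beta -> beta < alpha -> 0 <= a -> 0 <= b ->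
  energy (phi a b alpha beta) M = a * zeta M alpha - b * zeta M beta.
Proof.
move=> hM d0 db ba a0 b0.
have da : d%:R < alpha by apply: lt_trans ba.
set A := lattice0 M.
pose g (s : R) (q : 'rV[R]_d) := ((enorm q) `^ (- s))%:E.
have g0 : forall s q, (0 <= g s q)%E by move=> s q; rewrite lee_fin powR_ge0.
have fa := zeta_esum_fin hM d0 da.
have fb := zeta_esum_fin hM d0 db.
pose fp (q : 'rV[R]_d) := (Num.max (phi a b alpha beta (enorm q)) 0)%:E.
pose fm (q : 'rV[R]_d) := (Num.max (- phi a b alpha beta (enorm q)) 0)%:E.
have fp0 : forall q, (0 <= fp q)%E by move=> q; rewrite lee_fin le_max lexx orbT.
have fm0 : forall q, (0 <= fm q)%E by move=> q; rewrite lee_fin le_max lexx orbT.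
have Ea : (\esum_(q in A) (a%:E * g alpha q) = a%:E * (zeta M alpha)%:E)%E.
  by rewrite esumZ // ?esum_fineK // => q; apply: g0.
have Eb : (\esum_(q in A) (b%:E * g beta q) = b%:E * (zeta M beta)%:E)%E.
  by rewrite esumZ // ?esum_fineK // => q; apply: g0.
have pw : forall q, (fp q + b%:E * g beta q = fm q + a%:E * g alpha q)%E.
  move=> q; rewrite /fp /fm /g -!EFinM -!EFinD; congr (_%:E).
  rewrite /phi; set u := a * _; set v := b * _.
  have [h|h] := leP 0 (u - v).
    rewrite (max_r (_ : - (u - v) <= 0)); last by rewrite oppr_le0.
    lra.
  rewrite (max_l (_ : 0 <= - (u - v))); last by rewrite oppr_ge0 ltW.
  lra.
have Hsum : (\esum_(q in A) fp q + b%:E * (zeta M beta)%:E =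
             \esum_(q in A) fm q + a%:E * (zeta M alpha)%:E)%E.
  rewrite -Ea -Eb -!esumD; try (by move=> q _; rewrite ?fp0 ?fm0);
    try (by move=> q _; apply: mule_ge0; rewrite ?lee_fin ?powR_ge0).
  by apply: eq_esum => q _; rewrite pw.
have fpfin : (\esum_(q in A) fp q < +oo)%E.
  apply: (@le_lt_trans _ _ (a%:E * (zeta M alpha)%:E)%E); last by rewrite ltry.
  rewrite -Ea; apply: le_esum => x _; rewrite /fp /g -EFinM lee_fin ge_max /phi.
  apply/andP; split; last by rewrite mulr_ge0 ?powR_ge0.
  by rewrite lerBlDr lerDl mulr_ge0 // powR_ge0.
have fmfin : (\esum_(q in A) fm q < +oo)%E.
  apply: (@le_lt_trans _ _ (b%:E * (zeta M beta)%:E)%E); last by rewrite ltry.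
  rewrite -Eb; apply: le_esum => x _; rewrite /fm /g -EFinM lee_fin ge_max /phi.
  apply/andP; split; last by rewrite mulr_ge0 ?powR_ge0.
  by rewrite opprB lerBlDr lerDl mulr_ge0 // powR_ge0.
rewrite /energy -/A -/fp -/fm.
move: Hsum; rewrite -(esum_fineK fp0 fpfin) -(esum_fineK fm0 fmfin) -!EFinM -!EFinD.
move=> [] h; lra.
Qed.
End energy.


Section scale.
Variable R : realType.
Variable d : nat.

Lemma lattice_scale (M : 'M[R]_d) (l : R) :
  lattice (l *: M) = (fun q => l *: q) @` lattice M.
Proof.
apply/seteqP; split.
  move=> q [c ->]; exists (map_mx (fun z : int => z%:~R) c *m M); first by exists c.
  by rewrite scalemxAr.
move=> q [q' [c ->] <-]; exists c; by rewrite scalemxAr.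
Qed.

Lemma lattice0_scale (M : 'M[R]_d) (l : R) : l != 0 ->
  lattice0 (l *: M) = (fun q => l *: q) @` lattice0 M.
Proof.
move=> l0; rewrite /lattice0 lattice_scale; apply/seteqP; split.
  move=> q [[q' Lq' <-] /= h]; exists q' => //; split => //= q0; apply: h.
  by rewrite /= q0 scaler0.
move=> q [q' [Lq' /= q0] <-]; split; first by exists q'.
by move=> /= /eqP; rewrite scaler_eq0 (negPf l0) /= => /eqP.
Qed.

Lemma enorm_scale (q : 'rV[R]_d) (l : R) : 0 <= l -> enorm (l *: q) = l * enorm q.
Proof.
move=> l0; rewrite /enorm.
under eq_bigr do rewrite mxE exprMn.
by rewrite -mulr_sumr sqrtrM ?sqr_ge0 // sqrtr_sqr ger0_norm.
Qed.

Lemma fine_scale (x : R) (y : \bar R) : 0 < x -> (0 <= y)%E -> fine (x%:E * y)%E = x * fine y.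
Proof.
move=> x0; case: y => [r|_|] //=.
by rewrite mulry gtr0_sg // mul1e /= mulr0.
Qed.

Lemma zeta_scale (M : 'M[R]_d) (l s : R) : 0 < l ->
  zeta (l *: M) s = l `^ (- s) * zeta M s.
Proof.
move=> l0; rewrite /zeta lattice0_scale ?gt_eqF // esum_image; last first.
  by move=> q q' _ _; apply: scalerI; rewrite gt_eqF.
rewrite (eq_esum (b := fun q => ((l `^ (- s))%:E * (enorm q `^ (- s))%:E)%E)); last first.
  move=> q _ /=; rewrite enorm_scale; last exact: ltW.
  by rewrite powRM ?enorm_ge0 // ?EFinM // ltW.
rewrite esumZ ?powR_ge0 // => [|q]; last by rewrite lee_fin powR_ge0.
by rewrite fine_scale ?powR_gt0 //; apply: esum_ge0 => q _; rewrite lee_fin powR_ge0.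
Qed.

Lemma isometric_scale (L L' : 'M[R]_d) (l : R) : 0 < l ->
  isometric (l *: L) (l *: L') -> isometric L L'.
Proof.
move=> l0 [Q [QQ hQ]]; exists Q; split => //.
have l0' : l != 0 by rewrite gt_eqF.
rewrite !lattice_scale in hQ.
apply/seteqP; split.
  move=> _ [q Lq <-].
  have : ((fun q => q *m Q) @` ((fun q => l *: q) @` lattice L)) (l *: (q *m Q)).
    by exists (l *: q); [exists q|rewrite scalemxAl].
  by rewrite hQ => -[q' Lq' /(scalerI l0') <-].
move=> q' Lq'.
have : ((fun q => l *: q) @` lattice L') (l *: q') by exists q'.
rewrite -hQ => -[_ [q Lq <-]]; rewrite -scalemxAl => /(scalerI l0') h.
by exists q => //; rewrite h.
Qed.

Lemma enorm_gt0 (q : 'rV[R]_d) : q != 0 -> 0 < enorm q.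
Proof.
move=> q0; rewrite lt_neqAle enorm_ge0 andbT eq_sym; apply: contra q0 => /eqP e0.
apply/eqP/matrixP => i j; rewrite !ord1 mxE; apply/eqP; rewrite -normr_eq0.
by rewrite eq_le normr_ge0 andbT -e0 enorm_ge_coord.
Qed.

Lemma zeta_pos (M : 'M[R]_d) (s : R) : \det M != 0 -> (0 < d)%N -> d%:R < s ->
  0 < zeta M s.
Proof.
move=> hM d0 ds.
have uM : M \in unitmx by rewrite unitmxE unitfE.
set c : 'rV[int]_d := const_mx 1.
have c0 : c != 0.
  apply/eqP => /matrixP /(_ ord0 (Ordinal d0)); rewrite !mxE => /eqP; by rewrite oner_eq0.
set q := iota_mx R c *m M.
have Lq : lattice0 M q by rewrite lattice0E //; exists c.
have q0 : q != 0.
  by move: Lq => [_ /= /eqP].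
have hpos : (0 < ((enorm q) `^ (- s))%:E)%E by rewrite lte_fin powR_gt0 // enorm_gt0.
have hfin := zeta_esum_fin hM d0 ds.
rewrite /zeta fine_gt0 // hfin andbT.
apply: lt_le_trans hpos _; apply: esum_ge; exists [set q].
  by split; [exact: finite_set1|move=> x ->].
by rewrite fsbig_set1.
Qed.
End scale.


Lemma unit_covol_det (R : realType) (d : nat) (M : 'M[R]_d) : unit_covol M -> \det M != 0.
Proof. by rewrite /unit_covol => h; apply/eqP => h0; move: h; rewrite h0 normr0 => /eqP; rewrite eq_sym oner_eq0. Qed.

Lemma key_energy (R : realType) (d : nat) (alpha beta a b : R) (M : 'M[R]_d) :
  (1 <= d)%N -> d%:R < beta -> beta < alpha -> 0 < a -> 0 < b -> unit_covol M ->
  0 < lambda_phi a b alpha beta M /\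
  energy (phi a b alpha beta) (lambda_phi a b alpha beta M *: M) =
    - ((1 - beta / alpha) * b) * (zeta M beta * lambda_phi a b alpha beta M `^ (- beta)).
Proof.
move=> d1 db ba a0 b0 hM.
have hdet := unit_covol_det hM.
have da : d%:R < alpha by apply: lt_trans ba.
have zb := zeta_pos hdet d1 db.
have za := zeta_pos hdet d1 da.
have b0' : 0 < beta by apply: le_lt_trans db; rewrite ler0n.
have a0' : 0 < alpha by apply: lt_trans ba.
set Q := alpha * a * zeta M alpha / (beta * b * zeta M beta).
have Q0 : 0 < Q by rewrite /Q divr_gt0 // !mulr_gt0.
have ab0 : 0 < alpha - beta by rewrite subr_gt0.
have l0 : 0 < lambda_phi a b alpha beta M by rewrite /lambda_phi powR_gt0.
split => //.
set l := lambda_phi a b alpha beta M.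
have lQ : l `^ (alpha - beta) = Q.
  by rewrite /l /lambda_phi -powRrM mulVf ?gt_eqF // powRr1 // ltW.
have hdl : \det (l *: M) != 0 by rewrite detZ mulf_neq0 // expf_neq0 // gt_eqF.
rewrite energy_formula // ?ltW // !zeta_scale //.
have -> : l `^ (- alpha) = l `^ (- beta) * Q^-1.
  rewrite -lQ -powRN -powRD; last by apply/implyP => _; rewrite gt_eqF.
  by congr (_ `^ _); ring.
rewrite /Q.
set t := l `^ (- beta); set za' := zeta M alpha; set zb' := zeta M beta.
field.
apply/and5P; split; rewrite ?gt_eqF // ?mulr_gt0 //.
Qed.

Lemma powR_lt_anti (R : realType) (x y p : R) : 0 < x -> x < y -> 0 < p ->
  y `^ (- p) < x `^ (- p).
Proof.
move=> x0 xy p0; have y0 : 0 < y by apply: lt_trans xy.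
rewrite (powRN y) (powRN x) ltf_pV2 ?posrE ?powR_gt0 //.
by apply: (gt0_ltr_powR p0) => //; rewrite nnegrE ltW.
Qed.

Unset Implicit Arguments. Set Strict Implicit.

Theorem proposition2p2 (R : realType) (d : nat) (alpha beta a b : R)
  (Ld : 'M[R]_d) :
  (1 <= d)%N -> d%:R < beta -> beta < alpha -> 0 < a -> 0 < b ->
  unit_covol Ld ->
  (forall L : 'M[R]_d, unit_covol L -> zeta Ld beta <= zeta L beta) ->
  (forall L : 'M[R]_d, is_basis L ->
     energy (phi a b alpha beta) ((lambda_phi a b alpha beta Ld) *: Ld)
       <= energy (phi a b alpha beta) L /\
     (energy (phi a b alpha beta) L =
        energy (phi a b alpha beta) ((lambda_phi a b alpha beta Ld) *: Ld) ->
      isometric L ((lambda_phi a b alpha beta Ld) *: Ld))) ->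
  forall L : 'M[R]_d, unit_covol L ->
    lambda_phi a b alpha beta Ld <= lambda_phi a b alpha beta L /\
    (lambda_phi a b alpha beta L = lambda_phi a b alpha beta Ld -> isometric L Ld).
Proof.
move=> d1 db ba a0 b0 hLd zmin hE L hL.
have [l1p E1] := key_energy d1 db ba a0 b0 hLd.
have [l2p E2] := key_energy d1 db ba a0 b0 hL.
set l1 := lambda_phi a b alpha beta Ld in l1p E1 hE *.
set l2 := lambda_phi a b alpha beta L in l2p E2 *.
have b0' : 0 < beta by apply: le_lt_trans db; rewrite ler0n.
have a0' : 0 < alpha by apply: lt_trans ba.
have kp : 0 < (1 - beta / alpha) * b.
  by rewrite mulr_gt0 // subr_gt0 ltr_pdivrMr // mul1r.
have zLd := zeta_pos (unit_covol_det hLd) d1 db.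
have zL := zeta_pos (unit_covol_det hL) d1 db.
have zm := zmin L hL.
have hb : is_basis (l2 *: L).
  by rewrite /is_basis detZ mulf_neq0 // ?expf_neq0 ?(gt_eqF l2p) //; apply: unit_covol_det.
have [Hle Heq] := hE _ hb.
have T21 := Hle.
rewrite E1 in T21; rewrite E2 in T21.
have kn : - ((1 - beta / alpha) * b) < 0 by rewrite oppr_lt0.
rewrite (ler_nM2l kn) in T21.
have t1p : 0 < l1 `^ (- beta) by rewrite powR_gt0.
have t2p : 0 < l2 `^ (- beta) by rewrite powR_gt0.
have tt : l2 `^ (- beta) <= l1 `^ (- beta).
  rewrite -(ler_pM2l zLd); apply: le_trans T21; rewrite ler_pM2r //.
have l12 : l1 <= l2.
  rewrite leNgt; apply/negP => h.
  have := powR_lt_anti l2p h b0'.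
  by rewrite ltNge tt.
split => // e21.
have zeq : zeta L beta = zeta Ld beta.
  apply/eqP; rewrite eq_le zm andbT.
  by move: T21; rewrite e21 (ler_pM2r t1p).
have Eeq : energy (phi a b alpha beta) (l2 *: L) = energy (phi a b alpha beta) (l1 *: Ld).
  apply: (etrans E2); rewrite zeq e21; exact: (esym E1).
have := Heq Eeq; rewrite e21.
exact: isometric_scale.
Qed.
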